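(* There exist a continuum $K$ and a pairwise disjoint sequence $(f_n)_{n\in\mathbb{N}}$ in $C_1(K)$ such that the extension $K((f_n)_{n\in\mathbb{N}})$ is disconnected.
   Context: All spaces are Hausdorff. A continuum is a metrizable, compact, connected space. For a compact space $K$, $C_1(K)$ denotes the set of continuous functions $K\to[0,1]$; $f,g$ are disjoint if $f\cdot g=0$. For a real function $f$ on $K$, $supp(f)$ is the closure of $\{x\in K: f(x)\neq 0\}$. For a pairwise disjoint sequence $(f_n)_{n\in\mathbb{N}}$ in $C_1(K)$, let $D((f_n)_{n\in\mathbb{N}})$ be the union of all open sets $U\subseteq K$ such that $\{n: U\cap supp(f_n)\neq\emptyset\}$ is finite. The extension of $K$ by $(f_n)_{n\in\mathbb{N}}$, denoted $K((f_n)_{n\in\mathbb{N}})$, is the closure in $K\times[0,1]$ of the graph of the function $\sum_{n\in\mathbb{N}} f_n$ restricted to $D((f_n)_{n\in\mathbb{N}})$. *)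

(* Defs.v *)
From HB Require Import structures.
From mathcomp Require Import all_boot all_order all_algebra.
From mathcomp Require Import all_classical all_reals all_analysis.
Set Implicit Arguments. Unset Strict Implicit. Unset Printing Implicit Defensive.
Import Order.TTheory GRing.Theory Num.Theory.
Import numFieldNormedType.Exports.
Local Open Scope classical_set_scope.
Local Open Scope ring_scope.

(* Metrizability is rendered by K carrying a pseudometric structure
   (pseudoMetricType R) inducing its topology, plus the Hausdorff property. *)
Definition continuum (R : realType) (K : pseudoMetricType R) : Prop :=
  hausdorff_space K /\ compact [set: K] /\ connected [set: K].

Definition C1 (R : realType) (K : topologicalType) (f : K -> R) : Prop :=
  continuous f /\ forall x, 0 <= f x <= 1.

Definition pairwise_disjoint_seq (R : realType) (K : topologicalType)
  (f : nat -> K -> R) : Prop :=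
  forall n m : nat, n <> m -> forall x, f n x * f m x = 0.

Definition supp (R : realType) (K : topologicalType) (f : K -> R) : set K :=
  closure [set x | f x != 0].

Definition Dset (R : realType) (K : topologicalType) (f : nat -> K -> R) : set K :=
  \bigcup_(U in [set U : set K | open U /\
        finite_set [set n : nat | U `&` supp (f n) !=set0]]) U.

Definition sumf (R : realType) (K : topologicalType) (f : nat -> K -> R) (x : K) : R :=
  \big[+%R/0]_(0 <= n <oo) f n x.

(* K((f_n)): closure in K x [0,1] (subspace of K x R) of the graph of
   \sum_n f_n restricted to D((f_n)). *)
Definition extension (R : realType) (K : topologicalType) (f : nat -> K -> R)
  : set (K * R) :=
  closure [set p : K * R | Dset f p.1 /\ p.2 = sumf f p.1]
  `&` [set p : K * R | p.2 \in `[(0:R), 1]%classic].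

(* Main.v *)
Require Import Defs.
From HB Require Import structures.
From mathcomp Require Import all_boot all_order all_algebra.
From mathcomp Require Import all_classical all_reals all_analysis.
From mathcomp Require Import ring lra zify.
Import Order.TTheory GRing.Theory Num.Theory.
Import numFieldNormedType.Exports.
Local Open Scope classical_set_scope.
Local Open Scope ring_scope.
Section Sub.
Variable X : topologicalType.
Variable A : set X.

Lemma sub_open (U : set A) : open U -> exists2 V, open V & U = set_val @^-1` V.
Proof. by case=> V oV <-; exists V. Qed.

Lemma sub_nbhs (k : A) (C : set A) : nbhs k C ->
  exists2 V, nbhs (set_val k) V & set_val @^-1` V `<=` C.
Proof.
rewrite nbhsE => -[U [oU Uk] UC].
have [V oV UV] := sub_open U oU.
exists V; last by rewrite -UV.
exists V => //; split => //; by move: Uk; rewrite UV.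
Qed.

Lemma sub_compact : compact A -> compact [set: A].
Proof.
move=> cA F FF _.
have GA : (set_val @ F) A.
  by apply: (@filterS _ F FF setT) => [k _|]; [exact: set_valP|exact: filterT].
have [x [Ax clx]] := cA _ _ GA.
exists (SigSub (mem_set Ax)); split => // B C FB nC.
have [V nV VC] := sub_nbhs _ _ nC.
have : (set_val @ F) (set_val @` B).
  by apply: (@filterS _ F FF B) => // b Bb; exists b.
move=> /clx /(_ nV) [y [[b Bb <-] Vb]].
by exists b; split => //; apply: VC.
Qed.


Lemma sub_connected : connected A -> connected [set: A].
Proof.
move=> cA B [b0 Bb0] [C oC BC] [C' cC' BC'].
have [V oV CV] := sub_open C oC.
have [W oW CW] := sub_open _ (closed_openC cC').
pose B' := set_val @` B.
have eB : B' = A `&` V.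
  apply/seteqP; split => [y [b Bb <-]|y [Ay Vy]].
    split; first exact: set_valP.
    by move: Bb; rewrite BC CV => -[].
  exists (SigSub (mem_set Ay)) => //; rewrite BC CV; split => //.
have eB' : B' = A `&` ~` W.
  apply/seteqP; split => [y [b Bb <-]|y [Ay Wy]].
    split; first exact: set_valP.
    move: Bb; rewrite BC' => -[_ Cb] Wb.
    have : (~` C') b by rewrite CW.
    by [].
  exists (SigSub (mem_set Ay)) => //; rewrite BC'; split => //.
  apply: contrapT => nC.
  have : (~` C') (SigSub (mem_set Ay)) by [].
  by rewrite CW.
have BA : B' = A.
  apply: cA.
  - by exists (set_val b0), b0.
  - by exists V.
  - by exists (~` W) => //; exact: open_closedC.
apply/seteqP; split => // k _.
have : B' (set_val k) by rewrite BA; exact: set_valP.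
by case=> b Bb /val_inj <-.
Qed.

Lemma sub_hausdorff : hausdorff_space X -> hausdorff_space A.
Proof.
move=> hX p q clpq; apply: val_inj; apply: hX => U V nU nV.
have nU' := initial_continuous nU.
have nV' := initial_continuous nV.
have [k [Uk Vk]] := clpq _ _ nU' nV'.
by exists (set_val k).
Qed.

End Sub.
Section Ex.
Variable R : realType.

Lemma fst_cont (U V : topologicalType) : continuous (fst : U * V -> U).
Proof. by move=> x; apply: cvg_fst. Qed.
Lemma snd_cont (U V : topologicalType) : continuous (snd : U * V -> V).
Proof. by move=> x; apply: cvg_snd. Qed.

Definition a (n : nat) : R := (2^-1) ^+ n.

Lemma a_gt0 n : 0 < a n.
Proof. by rewrite /a exprn_gt0 // invr_gt0. Qed.

Lemma half_ge0 : 0 <= (2:R)^-1. Proof. by rewrite invr_ge0. Qed.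
Lemma half_le1 : (2:R)^-1 <= 1. Proof. by rewrite invf_le1 // ler1n. Qed.

Lemma a_le1 n : a n <= 1.
Proof. exact: exprn_ile1 half_ge0 half_le1. Qed.

Lemma a0 : a 0 = 1. Proof. by rewrite /a expr0. Qed.

Lemma aS n : a n.+1 = a n / 2.
Proof. by rewrite /a exprSr. Qed.

Lemma a_mono n m : (n <= m)%N -> a m <= a n.
Proof. by move=> nm; apply: (ler_wiXn2l half_ge0 half_le1). Qed.

Lemma a_lt n m : (n < m)%N -> a m <= a n / 2.
Proof. by move=> nm; rewrite -aS; apply: a_mono. Qed.


Definition w n := a n / 2.
Definition h n (x : R) : R := Num.max 0 (1 - `|x - a n| / w n).

Lemma w_gt0 n : 0 < w n. Proof. by rewrite /w divr_gt0 // a_gt0. Qed.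

Lemma h_ge0 n x : 0 <= h n x. Proof. by rewrite /h le_max lexx. Qed.
Lemma h_le1 n x : h n x <= 1.
Proof.
rewrite /h ge_max ler01 /= lerBlDr lerDl.
by rewrite divr_ge0 // ltW // w_gt0.
Qed.

Lemma h_zero n x : w n <= `|x - a n| -> h n x = 0.
Proof.
move=> H; rewrite /h; apply/max_idPl.
rewrite subr_le0 ler_pdivlMr ?w_gt0 // mul1r //.
Qed.

Lemma h_an n : h n (a n) = 1.
Proof. by rewrite /h subrr normr0 mul0r subr0; apply/max_idPr; apply: ler01. Qed.

Lemma h_am n m : m <> n -> h n (a m) = 0.
Proof.
move=> mn; apply: h_zero; rewrite /w.
have := a_gt0 n; have := a_gt0 m.
case: (ltngtP m n) => [lmn|lnm|emn]; last by [].
- have := a_lt _ _ lmn => H1 H2 H3.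
  rewrite ger0_norm; lra.
- have := a_lt _ _ lnm => H1 H2 H3.
  rewrite ler0_norm; lra.
Qed.

Lemma h_at0 n : h n 0 = 0.
Proof.
apply: h_zero; rewrite /w sub0r normrN ger0_norm; have := a_gt0 n; lra.
Qed.

Lemma h_far n x : (0 < n)%N -> 7/8 < x -> h n x = 0.
Proof.
move=> n0 x8; apply: h_zero; rewrite /w.
have H1 : a n <= 1/2 by have := a_mono _ _ n0; rewrite /a expr1 mul1r.
have := a_gt0 n => H2.
rewrite ger0_norm; lra.
Qed.

Lemma h_cont n : continuous (h n).
Proof.
apply: max_fun_continuous; first exact: cst_continuous.
move=> x.
have -> : (fun y => 1 - `|y - a n| / w n) = (fun=> 1) + (fun y => - (`|y - a n| / w n)) by [].
apply: continuousD; first exact: cst_continuous.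
apply: continuousN.
have -> : (fun y => `|y - a n| / w n) = (fun y => `|y - a n|) \* (fun=> (w n)^-1) by [].
apply: continuousM; last exact: cst_continuous.
apply: (continuous_comp (f := fun y => y - a n)); last exact: norm_continuous.
have -> : (fun y => y - a n) = id + (fun=> - a n) by [].
apply: continuousD; first by move=> ?; apply: cvg_id.
exact: cst_continuous.
Qed.


Lemma a_small z : 0 < z -> exists N, a N < z.
Proof.
move=> z0.
have H : `|(2:R)^-1| < 1 by rewrite ger0_norm ?invr_ge0 // invf_lt1 // ltr1n.
have := @cvgr_lt R nat \oo _ (fun n => (2:R)^-1 ^+ n) 0 (cvg_expr H) z z0.
move=> /(_ _) /filter_ex [N HN]; by exists N.
Qed.

Definition Sset : set R := [set x | x = 0 \/ exists n, x = a n].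

Lemma S_bnd s : Sset s -> 0 <= s <= 1.
Proof.
case=> [->|[n ->]]; first by rewrite lexx ler01.
by rewrite ltW ?a_gt0 // a_le1.
Qed.

Lemma S_gap z : ~ Sset z -> exists2 r : R, 0 < r & forall s, Sset s -> r <= `|z - s|.
Proof.
move=> zS.
have z0 : z != 0 by apply/eqP => z0; apply: zS; left.
case: (ltrgtP z 0) => [zn|zp|]; last by move/eqP: z0.
  exists (- z); first by rewrite oppr_gt0.
  move=> s /S_bnd /andP[s0 _]; rewrite ler0_norm; lra.
case: (ltrP 1 z) => [z1|z1].
  exists (z - 1); first by rewrite subr_gt0.
  move=> s /S_bnd /andP[_ s1]; rewrite ger0_norm; lra.
have exP : exists n, a n < z by apply: a_small.
case: (ex_minnP exP) => N PN minN.
have N0 : N <> 0%N by move=> N0; move: PN; rewrite N0 a0; lra.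
have PN' : z < a N.-1.
  have : ~~ (a N.-1 < z).
    apply/negP => /minN; case: N N0 {PN minN} => // N _; rewrite /=; lia.
  rewrite -leNgt le_eqVlt => /orP[/eqP eq|//].
  by exfalso; apply: zS; right; exists N.-1.
exists (Num.min (z - a N) (a N.-1 - z)).
  by rewrite lt_min !subr_gt0 PN PN'.
move=> s [->|[n ->]].
  rewrite subr0 ger0_norm; last lra.
  rewrite ge_min; apply/orP; left; have := a_gt0 N; lra.
case: (leqP N n) => nN.
  have := a_mono _ _ nN => H.
  rewrite ger0_norm; last lra.
  rewrite ge_min; apply/orP; left; lra.
have : (n <= N.-1)%N by case: N N0 {PN minN PN'} nN => // N _.
move=> /a_mono H.
rewrite ler0_norm; last lra.
rewrite ge_min; apply/orP; right; lra.
Qed.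

Lemma S_closed : closed Sset.
Proof.
move=> z zcl; apply: contrapT => zS.
have [r r0 Hr] := S_gap _ zS.
have [s [Ss bs]] := zcl _ (nbhsx_ballx z r r0).
move: bs; rewrite -ball_normE /= => bs.
by have := Hr _ Ss; lra.
Qed.


Definition I1 : set R := `[-1, 1]%classic.
Definition I0 : set R := `[0, 1]%classic.

Definition Kset : set (R * R) :=
  (fst @^-1` [set 0] `&` snd @^-1` I1) `|`
  (fst @^-1` I0 `&` snd @^-1` [set 1]) `|`
  (fst @^-1` Sset `&` snd @^-1` I0).

Lemma pre_fst (A : set R) : closed A -> closed (fst @^-1` A : set (R * R)).
Proof. by move=> cA; move/continuous_closedP : (@fst_cont R R); apply. Qed.
Lemma pre_snd (A : set R) : closed A -> closed (snd @^-1` A : set (R * R)).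
Proof. by move=> cA; move/continuous_closedP : (@snd_cont R R); apply. Qed.

Lemma K_closed : closed Kset.
Proof.
apply: closedU; first apply: closedU.
- by apply: closedI; [apply: pre_fst; exact: closed_eq|apply: pre_snd; exact: itv_closed].
- by apply: closedI; [apply: pre_fst; exact: itv_closed|apply: pre_snd; exact: closed_eq].
- by apply: closedI; [apply: pre_fst; exact: S_closed|apply: pre_snd; exact: itv_closed].
Qed.

Lemma K_compact : compact Kset.
Proof.
apply: (subclosed_compact K_closed (compact_setX (@segment_compact R (-1) 1) (@segment_compact R (-1) 1))).
move=> [x y]; rewrite /Kset /I1 /I0 /= !in_itv /=.
case=> [[[-> /andP[y1 y2]]|[/andP[x1 x2] ->]]|[/S_bnd /andP[x1 x2] /andP[y1 y2]]]; split => //;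
  apply/andP; split => //; lra.
Qed.


Lemma pair_cont1 (c : R) : continuous (fun y : R => (c, y) : R * R).
Proof.
move=> y W /= [[U V]] [/= Uc Vy] UVW; apply: filterS Vy => z Vz.
by apply: UVW; split => //=; exact: nbhs_singleton.
Qed.
Lemma pair_cont2 (c : R) : continuous (fun x : R => (x, c) : R * R).
Proof.
move=> y W /= [[U V]] [/= Uy Vc] UVW; apply: filterS Uy => z Uz.
by apply: UVW; split => //=; exact: nbhs_singleton.
Qed.

Lemma seg_conn1 (c u v : R) : connected ((fun y : R => (c, y) : R * R) @` `[u, v]).
Proof.
apply: connected_continuous_connected; first exact: segment_connected.
exact/continuous_subspaceT/pair_cont1.
Qed.
Lemma seg_conn2 (c u v : R) : connected ((fun x : R => (x, c) : R * R) @` `[u, v]).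
Proof.
apply: connected_continuous_connected; first exact: segment_connected.
exact/continuous_subspaceT/pair_cont2.
Qed.

Lemma itvI (u v x : R) : u <= x -> x <= v -> `[u, v]%classic x.
Proof. by move=> ux xv; rewrite /= in_itv /= ux xv. Qed.

Definition Lseg := (fun y : R => (0, y) : R * R) @` `[-1, 1].
Definition Tseg := (fun x : R => (x, 1) : R * R) @` `[0, 1].
Definition tooth n := (fun y : R => (a n, y) : R * R) @` `[0, 1].

Lemma K_eq : Kset = Lseg `|` \bigcup_(n in [set: nat]) (Tseg `|` tooth n).
Proof.
apply/seteqP; split => [[x y]|[x y]].
  rewrite /Kset /I1 /I0 /= !in_itv /=.
  case=> [[[-> yI]|[xI ->]]|[[->|[n ->]] yI]].
  - by left; exists y => //; rewrite in_itv.
  - by right; exists 0%N => //; left; exists x => //; rewrite in_itv.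
  - left; exists y => //; rewrite /= in_itv /=; move/andP: yI => [? ?]; apply/andP; split => //; lra.
  - by right; exists n => //; right; exists y => //; rewrite in_itv.
rewrite /Kset /I1 /I0 /=.
case=> [[y' yI [<- <-]]|[n _ [[x' xI [<- <-]]|[y' yI [<- <-]]]]].
- by left; left; split.
- by left; right; split.
- by right; split => //; right; exists n.
Qed.

Lemma K_connected : connected Kset.
Proof.
rewrite K_eq; apply: connectedU.
- exists (0, 1); split.
    by exists 1 => //; apply: itvI; lra.
  by exists 0%N => //; left; exists 0 => //; apply: itvI; lra.
- exact: seg_conn1.
apply: bigcup_connected.
  by exists (0, 1) => n _; left; exists 0 => //; apply: itvI; lra.
move=> n _; apply: connectedU; last exact: seg_conn1.
- exists (a n, 1); split.
    exists (a n) => //; apply: itvI; [exact: ltW (a_gt0 n)|exact: a_le1].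
  by exists 1 => //; apply: itvI; lra.
- exact: seg_conn2.
Qed.

Lemma psum (u : nat -> R) k : (forall n, n <> k -> u n = 0) ->
  forall N, \sum_(0 <= n < N) u n = if (k < N)%N then u k else 0.
Proof.
move=> H; elim=> [|N IH]; first by rewrite big_geq.
rewrite big_nat_recr //= IH; case: (eqVneq N k) => [->|Nk].
  by rewrite ltnn ltnSn add0r.
have e : (k < N.+1)%N = (k < N)%N by apply/idP/idP; lia.
by rewrite (H N (elimN eqP Nk)) addr0 e.
Qed.

Lemma sum_single (u : nat -> R) k : (forall n, n <> k -> u n = 0) ->
  \big[+%R/0]_(0 <= n <oo) u n = u k.
Proof.
move=> H; apply: cvg_lim; first exact: Rhausdorff.
apply: cvg_near_cst; exists k.+1 => // N /= kN.
by rewrite (psum _ k H) kN.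
Qed.

Definition K : pseudoMetricType R := Kset.
Definition F n (p : R * R) : R := h n p.1 * (1 - p.2).
Definition f n (k : K) : R := F n (set_val k).

Lemma K_cases q : Kset q ->
  ((forall n, F n q = 0) /\ (q.2 = 1 \/ (q.1 = 0 /\ -1 <= q.2 <= 1))) \/
  (exists k, [/\ q.1 = a k, 0 <= q.2 <= 1 &
     forall n, F n q = if n == k then 1 - q.2 else 0]).
Proof.
case: q => x y; rewrite /Kset /I1 /I0 /= !in_itv /=.
case=> [[[-> yI]|[xI ->]]|[[->|[k ->]] yI]].
- by left; split; [move=> n; rewrite /F /= h_at0 mul0r|right].
- by left; split; [move=> n; rewrite /F /= subrr mulr0|left].
- left; split; first by move=> n; rewrite /F /= h_at0 mul0r.
  right; split => //; move/andP: yI => [? ?]; apply/andP; split; lra.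
- right; exists k; split => // n; rewrite /F /=.
  case: (eqVneq n k) => [->|nk]; first by rewrite h_an mul1r.
  by rewrite h_am ?mul0r // => e; move: nk; rewrite e eqxx.
Qed.

Lemma f_cont n : continuous (f n).
Proof.
move=> k; apply: (continuous_comp (f := set_val) (g := F n)).
  exact: initial_continuous.
move: (set_val k) => q.
have -> : F n = (h n \o fst) \* (fun p => 1 - p.2) by [].
apply: continuousM.
  apply: continuous_comp; [exact: fst_cont|exact: h_cont].
have -> : (fun p : R * R => 1 - p.2) = (fun=> 1) + (fun p => - p.2) by [].
apply: continuousD; first exact: cst_continuous.
apply: continuousN; exact: snd_cont.
Qed.

Lemma f_C1 n : C1 (f n).
Proof.
split; first exact: f_cont.
move=> k; rewrite /f; case: (K_cases _ (set_valP k)) => [[-> _]|[j [_ /andP[y0 y1] ->]]].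
  by rewrite lexx ler01.
by case: eqP => _; [apply/andP; split; lra|rewrite lexx ler01].
Qed.

Lemma f_disj : pairwise_disjoint_seq f.
Proof.
move=> n m nm k; rewrite /f; case: (K_cases _ (set_valP k)) => [[Hz _]|[j [_ _ Hj]]].
  by rewrite Hz mul0r.
rewrite !Hj; case: (eqVneq n j) => [nj|nj]; last by rewrite mul0r.
by rewrite (_ : (m == j) = false) ?mulr0 //; apply/eqP => e; apply: nm; rewrite nj e.
Qed.

Lemma K_continuum : continuum K.
Proof.
split; first by apply: sub_hausdorff; exact: norm_hausdorff.
split; first exact: sub_compact K_compact.
exact: sub_connected K_connected.
Qed.


Lemma upper_infinite N : ~ finite_set [set n : nat | (N <= n)%N].
Proof.
move=> fin; apply: infinite_nat.
have -> : [set: nat] = `I_N `|` [set n : nat | (N <= n)%N].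
  apply/seteqP; split => // n _ /=; case: (ltnP n N) => H; [left|right] => //.
by rewrite finite_setU; split => //; exact: finite_II.
Qed.

Lemma supp_sub n (C : set K) : closed C -> (forall k, f n k != 0 -> C k) ->
  supp (f n) `<=` C.
Proof.
move=> cC H; rewrite /supp => k.
have := @closureS _ [set x | f n x != 0] C H.
by rewrite -(proj1 (closure_id C) cC); apply.
Qed.

Definition kx (k : K) : R := (set_val k).1.
Definition ky (k : K) : R := (set_val k).2.

Lemma kx_cont : continuous kx.
Proof.
move=> k; apply: (continuous_comp (f := set_val)); first exact: initial_continuous.
exact: fst_cont.
Qed.
Lemma ky_cont : continuous ky.
Proof.
move=> k; apply: (continuous_comp (f := set_val)); first exact: initial_continuous.
exact: snd_cont.
Qed.

Lemma notD (k : K) : kx k = 0 -> 0 <= ky k < 1 -> ~ Dset f k.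
Proof.
move=> k0 /andP[y0 y1] [U [oU finU] Uk].
have : nbhs k U by apply: open_nbhs_nbhs.
move=> /nbhs_ballP [e e0 eU].
have [N aN] := a_small _ e0.
apply: (upper_infinite N); apply: sub_finite_set finU => n Nn /=.
have Hq : Kset (a n, ky k).
  right; split; first by right; exists n.
  by apply: itvI => //; apply: ltW.
pose kn : K := SigSub (mem_set Hq).
exists kn; split.
  apply: eU; rewrite -initial_ballE /=.
  have -> : set_val k = (kx k, ky k) by rewrite /kx /ky; case: (set_val k).
  rewrite k0; split => /=.
    rewrite -ball_normE /= sub0r normrN ger0_norm ?(ltW (a_gt0 n)) //.
    by apply: le_lt_trans aN; apply: a_mono.
  by rewrite -ball_normE /= subrr normr0.
rewrite /supp; apply: subset_closure => /=.
rewrite /f /F /= h_an mul1r subr_eq0; apply/eqP => e1.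
by move: y1; rewrite -e1 /ky ltxx.
Qed.


Lemma sumf_zero (k : K) : (forall n, f n k = 0) -> sumf f k = 0.
Proof.
by move=> H; rewrite /sumf (sum_single (fun n => f n k) 0%N).
Qed.

Lemma sumf_cases (k : K) :
  (sumf f k = 0 /\ (ky k = 1 \/ (kx k = 0 /\ -1 <= ky k <= 1))) \/
  (sumf f k = 1 - ky k).
Proof.
case: (K_cases _ (set_valP k)) => [[Hz Hc]|[j [_ _ Hj]]].
  by left; split => //; apply: sumf_zero => n; exact: Hz.
right; rewrite /sumf (sum_single (fun n => f n k) j).
  by rewrite /f Hj eqxx.
by move=> n nj; rewrite /f Hj; case: eqP.
Qed.

Lemma half_norm (z : R) : z <= -(1/2) \/ 1/2 <= z -> 1/2 <= `|z|.
Proof. by case=> H; [rewrite ler0_norm; lra|rewrite ger0_norm; lra]. Qed.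

Lemma phi_bound k : Dset f k -> 1/2 <= `|sumf f k + ky k - 1/2|.
Proof.
move=> Dk; apply: half_norm.
case: (sumf_cases k) => [[-> [->|[x0 /andP[ym yp]]]]|->]; last by right; lra.
  by right; lra.
case: (ltrP (ky k) 0) => y0; first by left; lra.
case: (ltrP (ky k) 1) => y1; last by right; lra.
by exfalso; apply: (notD k x0 _ Dk); rewrite y0 y1.
Qed.

Lemma Hp0 : Kset (1, 1).
Proof. by left; right; split => //; apply: itvI; [exact: ler01|exact: lexx]. Qed.
Lemma Hp1 : Kset (0, -1).
Proof. by left; left; split => //; apply: itvI => /=; lra. Qed.

Definition k0 : K := SigSub (mem_set Hp0).
Definition k1 : K := SigSub (mem_set Hp1).

Lemma fk0 n : f n k0 = 0.
Proof. by rewrite /f /F /= subrr mulr0. Qed.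
Lemma fk1 n : f n k1 = 0.
Proof. by rewrite /f /F /= h_at0 mul0r. Qed.

Lemma Dk0 : Dset f k0.
Proof.
exists [set k | 7/8 < kx k]; last by rewrite /= /kx /=; lra.
split. have H := proj1 (continuousP kx) kx_cont. have H2 := H _ (@open_gt R (7/8)). exact: H2.
apply: (@sub_finite_set _ _ `I_1); last exact: finite_II.
move=> n [k [/= k8 sk]].
rewrite /= ltnNge; apply/negP => n0.
have : supp (f n) `<=` [set k | kx k <= 7/8].
  apply: supp_sub.
    have H := proj1 (continuous_closedP kx) kx_cont. have H2 := H _ (@closed_le R (7/8)). exact: H2.
  move=> k' /eqP fk; rewrite /=; case: (lerP (kx k') (7/8)) => // k'8.
  by exfalso; apply: fk; rewrite /f /F h_far ?mul0r.
by move=> /(_ k sk) /=; lra.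
Qed.

Lemma Dk1 : Dset f k1.
Proof.
exists [set k | ky k < -(1/2)]; last by rewrite /= /ky /=; lra.
split. have H := proj1 (continuousP ky) ky_cont. have H2 := H _ (@open_lt R (-(1/2))). exact: H2.
apply: (@sub_finite_set _ _ `I_0); last exact: finite_II.
move=> n [k [/= k8 sk]].
exfalso.
have : supp (f n) `<=` [set k | 0 <= ky k].
  apply: supp_sub.
    have H := proj1 (continuous_closedP ky) ky_cont. have H2 := H _ (@closed_ge R 0). exact: H2.
  move=> k' /eqP fk; rewrite /=.
  case: (K_cases _ (set_valP k')) => [[Hz _]|[j [_ /andP[? ?] _]]] //.
  by exfalso; apply: fk; exact: Hz.
by move=> /(_ k sk) /=; lra.
Qed.


Definition phi (p : K * R) : R := p.2 + ky p.1 - 1/2.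

Lemma phi_cont : continuous phi.
Proof.
have -> : phi = (fun p : K * R => p.2) + (fun p : K * R => ky p.1) + (fun=> - (1/2)) by [].
move=> p; apply: continuousD; last exact: cst_continuous.
apply: continuousD; first exact: snd_cont.
apply: continuous_comp; [exact: fst_cont|exact: ky_cont].
Qed.

Lemma E_bnd p : extension f p -> 1/2 <= `|phi p|.
Proof.
move=> [cl _].
have cC : closed [set p : K * R | 1/2 <= `|phi p|].
  have Hc : continuous (fun p => `|phi p|).
    move=> q; apply: continuous_comp; [exact: phi_cont|exact: norm_continuous].
  have H := proj1 (continuous_closedP _) Hc.
  have H2 := H _ (@closed_ge R (1/2)). exact: H2.
have sub : [set p : K * R | Dset f p.1 /\ p.2 = sumf f p.1] `<=` [set p | 1/2 <= `|phi p|].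
  by move=> [k t] [Dk /= ->]; rewrite /phi /=; exact: phi_bound.
have := closureS sub; rewrite -(proj1 (closure_id _) cC); apply; exact: cl.
Qed.

Lemma E_in (k : K) : Dset f k -> sumf f k = 0 -> extension f (k, 0).
Proof.
move=> Dk s0; split; first by apply: subset_closure; split => //=; rewrite s0.
by rewrite /=; apply/mem_set; apply: itvI; [exact: lexx|exact: ler01].
Qed.

Lemma not_conn : ~ connected (extension f).
Proof.
move=> conn.
have Eq0 : extension f (k0, 0) by apply: E_in; [exact: Dk0|exact: sumf_zero fk0].
have Eq1 : extension f (k1, 0) by apply: E_in; [exact: Dk1|exact: sumf_zero fk1].
have eq : extension f `&` [set p | 0 < phi p] = extension f.
apply: conn.
- exists (k0, 0); split => //; rewrite /phi /ky /=; lra.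
- exists [set p | 0 < phi p] => //.
  have H := proj1 (continuousP _) phi_cont.
  have H2 := H _ (@open_gt R 0). exact: H2.
- exists [set p | 0 <= phi p].
    have H := proj1 (continuous_closedP _) phi_cont.
    have H2 := H _ (@closed_ge R 0). exact: H2.
  apply/seteqP; split => [p [Ep /= pp]|p [Ep /= pp]]; split => //=.
    exact: ltW.
  have := E_bnd _ Ep; rewrite ger0_norm //; lra.
have : (extension f `&` [set p | 0 < phi p]) (k1, 0) by rewrite eq.
by case=> _; rewrite /phi /ky /=; lra.
Qed.

End Ex.

Theorem theorem4p1 (R : realType) :
  exists (K : pseudoMetricType R) (f : nat -> K -> R),
    continuum K /\ (forall n, C1 (f n)) /\ pairwise_disjoint_seq f /\
    ~ connected (extension f).
Proof.
exists (K R), (@f R); split; first exact: K_continuum.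
split; first exact: f_C1.
split; first exact: f_disj.
exact: not_conn.
Qed.
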